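(* Every scalable NCG is asymptotically well designed, i.e. for every sequence $(d^{(n)})$ of user volume vectors with $T(d^{(n)})\to\infty$ one has $\mathrm{PoA}(d^{(n)})\to 1$.
   Context: A non-atomic congestion game (NCG) consists of: a finite set $A$ of resources; an integer $K\ge 1$ of user groups; pairwise disjoint finite nonempty sets $\mathcal S_1,\dots,\mathcal S_K$ of strategies, $\mathcal S=\bigcup_{k}\mathcal S_k$; constants $r(a,s)\ge 0$ with $\sum_{a} r(a,s)>0$ for every $s$ and $\sum_{s} r(a,s)>0$ for every $a$; continuous nondecreasing consumption price functions $\tau_a:[0,\infty)\to[0,\infty)$; and a user volume vector $d=(d_k)_{k=1}^K\in\mathbb R_{\ge 0}^K$ with total volume $T(d)=\sum_k d_k$. The game structure is fixed while $d$ varies (over all of $\mathbb R^K_{\ge0}$ unless a set of admissible user volume vectors is specified, in which case every quantification over user volume vectors ranges over that set). A feasible profile for $d$ is $f=(f_s)_{s\in\mathcal S}$ with $f_s\ge 0$ and $\sum_{s\in\mathcal S_k} f_s=d_k$ for all $k$; loads $f_a=\sum_{s} r(a,s)f_s$, strategy prices $\tau_s(f)=\sum_{a} r(a,s)\tau_a(f_a)$, social cost $C(f)=\sum_a f_a\tau_a(f_a)=\sum_s f_s\tau_s(f)$. $f$ is an NE-profile if for every $k$ and all $s,s'\in\mathcal S_k$ with $f_s>0$, $\tau_s(f)\le\tau_{s'}(f)$; an SO-profile if it minimizes $C$. All NE-profiles have the same cost, as do all SO-profiles; $\mathrm{PoA}(d)=C(\tilde f)/C(f^* )$ for an NE-profile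 $\tilde f$ and SO-profile $f^*$ for $d$. The game is asymptotically well designed (in AWDG) if $\mathrm{PoA}(d^{(n)})\to1$ whenever $T(d^{(n)})\to\infty$. Normalization: for $d$ with $T(d)>0$, put $\lambda_k=d_k/T(d)$ and $\lambda=(\lambda_k)_k$. For each resource $a$ let $I_a=\{\sum_s r(a,s)\xi_s:\ \xi\in\mathbb R^{\mathcal S}_{\ge0},\ \sum_s\xi_s\le 1\}=[0,\max_s r(a,s)]$. Scalability: the NCG is scalable if for every sequence $(d^{(n)})$ of user volume vectors with $T(d^{(n)})\to\infty$ there exist a subsequence $(n_i)$ and positive reals $(g_i)$ such that: (S0) $\lambda^{(n_i)}\to\lambda$ for some vector $\lambda$; (S1) there are limit price functions $l_a$ on $I_a$, each either a nondecreasing function with values in $[0,\infty)$, or $l_a\equiv+\infty$ on $I_a\cap(0,\infty)$; (S2) for all $a\in A$ and $x\in I_a$, $\tau_a(T(d^{(n_i)})x)/g_i\to l_a(x)$ as $i\to\infty$, and if $l_a(x)<\infty$ then $l_a$ is continuous at $x$; (S3) every group $k$ is either negligible, meaning that for every choice of feasible profiles $f^{(i)}$ for $d^{(n_i)}$, $\frac{1}{T(d^{(n_i)})g_i}\sum_{s\in\mathcal S_k} f^{(i)}_s\tau_s(f^{(i)})\to 0$, or has a tight strategy, i.e. some $s\in\mathcal S_k$ with $l_a$ real-valued for every $a$ with $r(a,s)>0$; (S4) in the limit game $\Gamma_\infty$ — the NCG with resources $A^{tight}$ (those $a$ with $r(a,s)>0$ for some tight $s$), strategy sets $\mathcal S_k^{tight}$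 (tight strategies of $\mathcal S_k$, only groups with $\mathcal S_k^{tight}\neq\emptyset$ included), the same $r(a,s)$, prices $l_a$, and user volume vector $\lambda$ — NE-profiles and SO-profiles have equal cost; (S5) the cost of NE-profiles of $\Gamma_\infty$ is positive. *)

(* Defs.v *)
From Stdlib Require Import Reals Lra Lia Arith.
Open Scope R_scope.

Fixpoint fsum (n : nat) (f : nat -> R) : R :=
  match n with
  | O => 0
  | S m => fsum m f + f m
  end.

Fixpoint fmax (n : nat) (f : nat -> R) : R :=
  match n with
  | O => 0
  | S m => Rmax (fmax m f) (f m)
  end.

(** Resources are 0..nA-1, strategies 0..nS-1,
    user groups 0..K-1; strategy s belongs to S_(grp s) (so the S_k are
    pairwise disjoint); r a s is the consumption constant r(a,s);
    tau a is the consumption price function of resource a. *)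
Record Game := mkGame {
  nA : nat;
  nS : nat;
  K : nat;
  grp : nat -> nat;
  r : nat -> nat -> R;
  tau : nat -> R -> R
}.

Definition valid_NCG (G : Game) : Prop :=
  (1 <= K G)%nat /\
  (forall s, (s < nS G)%nat -> (grp G s < K G)%nat) /\
  (forall k, (k < K G)%nat -> exists s, (s < nS G)%nat /\ grp G s = k) /\
  (forall a s, (a < nA G)%nat -> (s < nS G)%nat -> 0 <= r G a s) /\
  (forall s, (s < nS G)%nat -> 0 < fsum (nA G) (fun a => r G a s)) /\
  (forall a, (a < nA G)%nat -> 0 < fsum (nS G) (fun s => r G a s)) /\
  (forall a, (a < nA G)%nat ->
     (forall x, 0 <= x -> continuity_pt (tau G a) x) /\
     (forall x y, 0 <= x -> x <= y -> tau G a x <= tau G a y) /\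
     (forall x, 0 <= x -> 0 <= tau G a x)).

Definition loadp (G : Game) (f : nat -> R) (a : nat) : R :=
  fsum (nS G) (fun s => r G a s * f s).

Definition spricep (G : Game) (p : nat -> R -> R) (f : nat -> R) (s : nat) : R :=
  fsum (nA G) (fun a => r G a s * p a (loadp G f a)).

Definition costp (G : Game) (p : nat -> R -> R) (f : nat -> R) : R :=
  fsum (nA G) (fun a => loadp G f a * p a (loadp G f a)).

Definition gvol (G : Game) (f : nat -> R) (k : nat) : R :=
  fsum (nS G) (fun s => if Nat.eqb (grp G s) k then f s else 0).

Definition T (G : Game) (d : nat -> R) : R := fsum (K G) d.

Definition feasible (G : Game) (d : nat -> R) (f : nat -> R) : Prop :=
  (forall s, (s < nS G)%nat -> 0 <= f s) /\
  (forall k, (k < K G)%nat -> gvol G f k = d k).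

Definition sprice (G : Game) (f : nat -> R) (s : nat) : R := spricep G (tau G) f s.
Definition cost (G : Game) (f : nat -> R) : R := costp G (tau G) f.

Definition is_NE (G : Game) (d : nat -> R) (f : nat -> R) : Prop :=
  feasible G d f /\
  forall s s', (s < nS G)%nat -> (s' < nS G)%nat -> grp G s = grp G s' ->
    0 < f s -> sprice G f s <= sprice G f s'.

Definition is_SO (G : Game) (d : nat -> R) (f : nat -> R) : Prop :=
  feasible G d f /\ forall g, feasible G d g -> cost G f <= cost G g.

(** Asymptotically well designed, w.r.t. the set Adm of admissible user
    volume vectors: PoA(d^(n)) -> 1 whenever T(d^(n)) -> infinity,
    PoA being the ratio NE-cost / SO-cost (for any choice of NE- and
    SO-profiles; all NE- resp. SO-profiles have the same cost). *)
Definition AWDG (G : Game) (Adm : (nat -> R) -> Prop) : Prop :=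
  forall dn : nat -> nat -> R,
    (forall n, Adm (dn n)) ->
    cv_infty (fun n => T G (dn n)) ->
    forall fNE fSO : nat -> nat -> R,
      (forall n, is_NE G (dn n) (fNE n)) ->
      (forall n, is_SO G (dn n) (fSO n)) ->
      Un_cv (fun n => cost G (fNE n) / cost G (fSO n)) 1.

(** Extended nonnegative values for the limit price functions. *)
Inductive ER : Type :=
| Fin : R -> ER
| PInf : ER.

Definition ER_lim (u : nat -> R) (e : ER) : Prop :=
  match e with
  | Fin y => Un_cv u y
  | PInf => cv_infty u
  end.

Definition inI (G : Game) (a : nat) (x : R) : Prop :=
  0 <= x <= fmax (nS G) (fun s => r G a s).

(** Real value of a limit price (junk 0 at +infinity; only used where finite). *)
Definition lval (l : nat -> R -> ER) (a : nat) (x : R) : R :=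
  match l a x with Fin y => y | PInf => 0 end.

Definition real_valued (G : Game) (l : nat -> R -> ER) (a : nat) : Prop :=
  forall x, inI G a x -> exists y, l a x = Fin y.

Definition S1 (G : Game) (l : nat -> R -> ER) : Prop :=
  forall a, (a < nA G)%nat ->
    (forall x, inI G a x -> exists y, l a x = Fin y /\ 0 <= y) /\
    (forall x y, inI G a x -> inI G a y -> x <= y -> lval l a x <= lval l a y)
    \/
    (forall x, inI G a x -> 0 < x -> l a x = PInf).

Definition cont_at (G : Game) (l : nat -> R -> ER) (a : nat) (x : R) : Prop :=
  forall y, l a x = Fin y ->
  forall eps, 0 < eps -> exists delta, 0 < delta /\
    forall x', inI G a x' -> Rabs (x' - x) < delta ->
      exists y', l a x' = Fin y' /\ Rabs (y' - y) < eps.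

Definition tight (G : Game) (l : nat -> R -> ER) (s : nat) : Prop :=
  (s < nS G)%nat /\
  forall a, (a < nA G)%nat -> 0 < r G a s -> real_valued G l a.

(** Its profiles are represented as
    profiles on all strategies vanishing on non-tight strategies; then
    loads vanish on non-tight resources, so sums over all resources /
    strategies coincide with sums over A^tight / S^tight. *)
Definition lim_feasible (G : Game) (l : nat -> R -> ER) (lam : nat -> R)
    (h : nat -> R) : Prop :=
  (forall s, (s < nS G)%nat -> 0 <= h s) /\
  (forall s, (s < nS G)%nat -> ~ tight G l s -> h s = 0) /\
  (forall k, (k < K G)%nat -> (exists s, tight G l s /\ grp G s = k) ->
     gvol G h k = lam k).

Definition lim_NE (G : Game) (l : nat -> R -> ER) (lam : nat -> R)
    (h : nat -> R) : Prop :=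
  lim_feasible G l lam h /\
  forall s s', tight G l s -> tight G l s' -> grp G s = grp G s' ->
    0 < h s -> spricep G (lval l) h s <= spricep G (lval l) h s'.

Definition lim_SO (G : Game) (l : nat -> R -> ER) (lam : nat -> R)
    (h : nat -> R) : Prop :=
  lim_feasible G l lam h /\
  forall h', lim_feasible G l lam h' -> costp G (lval l) h <= costp G (lval l) h'.

Definition scalable (G : Game) (Adm : (nat -> R) -> Prop) : Prop :=
  forall dn : nat -> nat -> R,
    (forall n, Adm (dn n)) ->
    cv_infty (fun n => T G (dn n)) ->
    exists (phi : nat -> nat) (g : nat -> R) (lam : nat -> R) (l : nat -> R -> ER),
      (forall i j, (i < j)%nat -> (phi i < phi j)%nat) /\
      (forall i, 0 < g i) /\
      (forall k, (k < K G)%nat ->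
         Un_cv (fun i => dn (phi i) k / T G (dn (phi i))) (lam k)) /\
      S1 G l /\
      (forall a x, (a < nA G)%nat -> inI G a x ->
         ER_lim (fun i => tau G a (T G (dn (phi i)) * x) / g i) (l a x) /\
         cont_at G l a x) /\
      (forall k, (k < K G)%nat ->
         (forall fi : nat -> nat -> R,
            (forall i, feasible G (dn (phi i)) (fi i)) ->
            Un_cv (fun i => / (T G (dn (phi i)) * g i) *
                     fsum (nS G) (fun s => if Nat.eqb (grp G s) k
                                           then fi i s * sprice G (fi i) s else 0)) 0)
         \/ (exists s, tight G l s /\ grp G s = k)) /\
      (forall h h', lim_NE G l lam h -> lim_SO G l lam h' ->
         costp G (lval l) h = costp G (lval l) h') /\
      (forall h, lim_NE G l lam h -> 0 < costp G (lval l) h).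

(* Main.v *)
Require Import Defs.
From Stdlib Require Import Reals Lra Lia Arith ZArith ClassicalEpsilon Classical.
Open Scope R_scope.

Lemma fsum_ext n f g : (forall i, (i < n)%nat -> f i = g i) -> fsum n f = fsum n g.
Proof. induction n; simpl; intros H; auto. rewrite IHn by (intros; apply H; lia). rewrite H by lia. auto. Qed.

Lemma fsum_le n f g : (forall i, (i < n)%nat -> f i <= g i) -> fsum n f <= fsum n g.
Proof. induction n; simpl; intros H; [lra|]. assert (f n <= g n) by (apply H; lia).
 assert (fsum n f <= fsum n g) by (apply IHn; intros; apply H; lia). lra. Qed.

Lemma fsum_zero n : fsum n (fun _ => 0) = 0.
Proof. induction n; simpl; lra. Qed.

Lemma fsum_nonneg n f : (forall i, (i < n)%nat -> 0 <= f i) -> 0 <= fsum n f.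
Proof. intros H. rewrite <- (fsum_zero n). apply fsum_le. auto. Qed.

Lemma fsum_plus n f g : fsum n (fun i => f i + g i) = fsum n f + fsum n g.
Proof. induction n; simpl; lra. Qed.

Lemma fsum_minus n f g : fsum n (fun i => f i - g i) = fsum n f - fsum n g.
Proof. induction n; simpl; lra. Qed.

Lemma fsum_scal_l n c f : fsum n (fun i => c * f i) = c * fsum n f.
Proof. induction n; simpl; [lra|]. rewrite IHn. lra. Qed.

Lemma fsum_scal_r n c f : fsum n (fun i => f i * c) = fsum n f * c.
Proof. induction n; simpl; [lra|]. rewrite IHn. lra. Qed.

Lemma fsum_ge_term n f i : (forall j, (j < n)%nat -> 0 <= f j) -> (i < n)%nat -> f i <= fsum n f.
Proof. induction n; simpl; intros H Hi; [lia|].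
 assert (0 <= fsum n f) by (apply fsum_nonneg; intros; apply H; lia).
 assert (0 <= f n) by (apply H; lia).
 destruct (Nat.eq_dec i n). subst; lra.
 assert (f i <= fsum n f) by (apply IHn; [intros; apply H; lia| lia]). lra. Qed.

Lemma fsum_pos_ex n f : 0 < fsum n f -> exists i, (i < n)%nat /\ 0 < f i.
Proof. intros H. apply NNPP; intro C.
 assert (fsum n f <= fsum n (fun _ => 0)).
 { apply fsum_le. intros i Hi. apply Rnot_lt_le. intro. apply C. eauto. }
 rewrite fsum_zero in H0. lra. Qed.

Lemma fsum_swap n m F : fsum n (fun i => fsum m (fun j => F i j)) = fsum m (fun j => fsum n (fun i => F i j)).
Proof. induction n; simpl. symmetry; apply fsum_zero. rewrite IHn. rewrite <- fsum_plus. auto. Qed.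

Lemma fsum_ind n m v : (m < n)%nat -> fsum n (fun k => if Nat.eqb m k then v else 0) = v.
Proof. induction n; simpl; intros H; [lia|]. destruct (Nat.eq_dec m n).
 - subst. rewrite Nat.eqb_refl. rewrite (fsum_ext n _ (fun _ => 0)). rewrite fsum_zero; lra.
   intros i Hi. destruct (Nat.eqb_spec n i); [lia|auto].
 - rewrite IHn by lia. destruct (Nat.eqb_spec m n); [lia|lra]. Qed.

Lemma fmax_ge n f i : (i < n)%nat -> f i <= fmax n f.
Proof. induction n; simpl; intros H; [lia|]. destruct (Nat.eq_dec i n). subst; apply Rmax_r.
 eapply Rle_trans; [apply IHn; lia| apply Rmax_l]. Qed.

Lemma fmax_nonneg n f : 0 <= fmax n f.
Proof. induction n; simpl; [lra|]. eapply Rle_trans; [apply IHn| apply Rmax_l]. Qed.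

Lemma fsum_gvol G f : (forall s, (s < nS G)%nat -> (grp G s < K G)%nat) ->
  fsum (nS G) f = fsum (K G) (gvol G f).
Proof. intros H. unfold gvol. rewrite (fsum_swap (K G) (nS G) (fun k s => if Nat.eqb (grp G s) k then f s else 0)).
 apply fsum_ext. intros s Hs. symmetry; apply fsum_ind; auto. Qed.

Definition sincr (rho : nat -> nat) := forall i j, (i < j)%nat -> (rho i < rho j)%nat.

Lemma sincr_ge rho : sincr rho -> forall n, (n <= rho n)%nat.
Proof. intros H n; induction n; [lia|]. assert (rho n < rho (S n))%nat by (apply H; lia). lia. Qed.

Lemma sincr_S rho : (forall n, (rho n < rho (S n))%nat) -> sincr rho.
Proof. intros H i j Hij. induction Hij. apply H. specialize (H m). lia. Qed.

Lemma sincr_comp a b : sincr a -> sincr b -> sincr (fun n => a (b n)).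
Proof. unfold sincr; auto. Qed.

Lemma Un_cv_sub u L rho : Un_cv u L -> sincr rho -> Un_cv (fun n => u (rho n)) L.
Proof. intros H Hr eps He. destruct (H eps He) as [N HN]. exists N. intros n Hn.
 apply HN. pose proof (sincr_ge rho Hr n). lia. Qed.

Lemma cv_infty_sub u rho : cv_infty u -> sincr rho -> cv_infty (fun n => u (rho n)).
Proof. intros H Hr M. destruct (H M) as [N HN]. exists N. intros n Hn.
 apply HN. pose proof (sincr_ge rho Hr n). lia. Qed.

Lemma Un_cv_const c : Un_cv (fun _ => c) c.
Proof. intros eps He. exists O. intros. unfold Rdist, R_dist. rewrite Rminus_eq_0, Rabs_R0. auto. Qed.

Lemma Un_cv_ev u v L : Un_cv u L -> (exists N, forall n, (N <= n)%nat -> u n = v n) -> Un_cv v L.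
Proof. intros H [N HN] eps He. destruct (H eps He) as [N1 H1]. exists (max N N1). intros n Hn.
 rewrite <- HN by lia. apply H1. lia. Qed.

Lemma Un_cv_le_ev u v a b : Un_cv u a -> Un_cv v b -> (exists N, forall n, (N <= n)%nat -> u n <= v n) -> a <= b.
Proof. intros Hu Hv [N HN]. apply Rnot_lt_le. intro C.
 destruct (Hu ((a-b)/2)) as [N1 H1]. lra. destruct (Hv ((a-b)/2)) as [N2 H2]. lra.
 specialize (H1 (max N (max N1 N2)) ltac:(lia)). specialize (H2 (max N (max N1 N2)) ltac:(lia)).
 specialize (HN (max N (max N1 N2)) ltac:(lia)). unfold R_dist in *.
 apply Rabs_def2 in H1. apply Rabs_def2 in H2. lra. Qed.

Lemma Un_cv_squeeze u v w L : Un_cv u L -> Un_cv v L ->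
  (exists N, forall n, (N <= n)%nat -> u n <= w n <= v n) -> Un_cv w L.
Proof. intros Hu Hv [N HN] eps He. destruct (Hu eps He) as [N1 H1]. destruct (Hv eps He) as [N2 H2].
 exists (max N (max N1 N2)). intros n Hn. specialize (H1 n ltac:(lia)). specialize (H2 n ltac:(lia)).
 specialize (HN n ltac:(lia)). unfold R_dist in *.
 apply Rabs_def2 in H1. apply Rabs_def2 in H2. apply Rabs_def1; lra. Qed.

Lemma fsum_cv n (u : nat -> nat -> R) L : (forall i, (i < n)%nat -> Un_cv (fun j => u j i) (L i)) ->
  Un_cv (fun j => fsum n (u j)) (fsum n L).
Proof. induction n; simpl; intros H. apply Un_cv_const.
 apply CV_plus. apply IHn; intros; apply H; lia. apply H; lia. Qed.

Lemma Un_cv_le_bound u L M : Un_cv u L -> (exists N, forall n, (N <= n)%nat -> u n <= M) -> L <= M.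
Proof. intros H HN. eapply (Un_cv_le_ev u (fun _ => M)); eauto. apply Un_cv_const. Qed.

Lemma Un_cv_ge_bound u L M : Un_cv u L -> (exists N, forall n, (N <= n)%nat -> M <= u n) -> M <= L.
Proof. intros H HN. eapply (Un_cv_le_ev (fun _ => M) u); eauto. apply Un_cv_const. Qed.

Lemma Un_cv_ev_bound u L : Un_cv u L -> exists N, forall n, (N <= n)%nat -> u n < L + 1.
Proof. intros H. destruct (H 1 ltac:(lra)) as [N HN]. exists N. intros n Hn. specialize (HN n Hn).
 unfold R_dist in HN. apply Rabs_def2 in HN. lra. Qed.

Lemma cv_infty_ge u v : cv_infty u -> (exists N, forall n, (N <= n)%nat -> u n <= v n) -> cv_infty v.
Proof. intros H [N HN] M. destruct (H M) as [N1 H1]. exists (max N N1). intros n Hn.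
 specialize (H1 n ltac:(lia)). specialize (HN n ltac:(lia)). lra. Qed.

Lemma cv_infty_scal c u : 0 < c -> cv_infty u -> cv_infty (fun n => c * u n).
Proof. intros Hc H M. destruct (H (M / c)) as [N HN]. exists N. intros n Hn. specialize (HN n Hn).
 apply (Rmult_lt_compat_l c) in HN; auto. replace (c * (M/c)) with M in HN by (field; lra). lra. Qed.

Lemma cv_infty_bounded_false u L : cv_infty u -> (exists N, forall n, (N <= n)%nat -> u n <= L) -> False.
Proof. intros H [N HN]. destruct (H L) as [N1 H1]. specialize (H1 (max N N1) ltac:(lia)).
 specialize (HN (max N N1) ltac:(lia)). lra. Qed.

Lemma ev_and (P Q : nat -> Prop) : (exists N, forall n, (N <= n)%nat -> P n) ->
  (exists N, forall n, (N <= n)%nat -> Q n) -> exists N, forall n, (N <= n)%nat -> P n /\ Q n.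
Proof. intros [N1 H1] [N2 H2]. exists (max N1 N2). intros; split; [apply H1|apply H2]; lia. Qed.

Lemma ev_fsum n (P : nat -> nat -> Prop) : (forall i, (i < n)%nat -> exists N, forall j, (N <= j)%nat -> P i j) ->
  exists N, forall j, (N <= j)%nat -> forall i, (i < n)%nat -> P i j.
Proof. induction n; intros H. exists O; intros; lia.
 destruct IHn as [N1 H1]. intros; apply H; lia. destruct (H n ltac:(lia)) as [N2 H2].
 exists (max N1 N2). intros j Hj i Hi. destruct (Nat.eq_dec i n). subst; apply H2; lia. apply H1; lia. Qed.

Lemma cv_infty_ev_pos u : cv_infty u -> exists N, forall n, (N <= n)%nat -> 0 < u n.
Proof. intros H. destruct (H 0) as [N HN]. eauto. Qed.
Lemma Un_cv_ratio a b c : Un_cv a c -> Un_cv b c -> 0 < c -> Un_cv (fun n => a n / b n) 1.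
Proof. intros Ha Hb Hc eps He. set (e := Rmin (c/2) (eps * c / 4)).
 assert (He1 : e <= c/2) by apply Rmin_l. assert (He2 : e <= eps*c/4) by apply Rmin_r.
 assert (He0 : 0 < e). { unfold e, Rmin. destruct (Rle_dec (c/2) (eps*c/4)). lra. apply Rmult_lt_0_compat; [apply Rmult_lt_0_compat|]; lra. }
 destruct (Ha e He0) as [N1 H1]. destruct (Hb e He0) as [N2 H2]. exists (max N1 N2). intros n Hn.
 specialize (H1 n ltac:(lia)). specialize (H2 n ltac:(lia)). unfold R_dist in *.
 apply Rabs_def2 in H1. apply Rabs_def2 in H2. assert (Hb0 : c/2 < b n) by lra.
 replace (a n / b n - 1) with ((a n - b n) / b n) by (field; lra).
 unfold Rdiv. rewrite Rabs_mult. rewrite (Rabs_right (/ b n)) by (left; apply Rinv_0_lt_compat; lra).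
 assert (Rabs (a n - b n) < 2 * e) by (apply Rabs_def1; lra).
 apply Rle_lt_trans with (Rabs (a n - b n) * / (c/2)).
 apply Rmult_le_compat_l. apply Rabs_pos. apply Rinv_le_contravar; lra.
 apply Rlt_le_trans with (2 * e * / (c/2)). apply Rmult_lt_compat_r. apply Rinv_0_lt_compat; lra. auto.
 apply Rle_trans with (2 * (eps * c / 4) * / (c/2)). apply Rmult_le_compat_r. left; apply Rinv_0_lt_compat; lra. lra.
 right; field; lra. Qed.

Lemma extract_gen (P : nat -> nat -> Prop) : (forall N k, exists p, (N <= p)%nat /\ P k p) ->
  exists sg, sincr sg /\ forall n, P n (sg n).
Proof. intros H.
 assert (pick : forall N k, {p | (N <= p)%nat /\ P k p}) by (intros; apply constructive_indefinite_description; auto).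
 set (sg := fix sg n := match n with O => proj1_sig (pick O O) | S m => proj1_sig (pick (S (sg m)) (S m)) end).
 exists sg. split.
 - apply sincr_S. intros n. simpl. pose proof (proj2_sig (pick (S (sg n)) (S n))) as [Hp _]. simpl in Hp. lia.
 - intros n; destruct n; simpl. exact (proj2 (proj2_sig (pick O O))).
   exact (proj2 (proj2_sig (pick (S (sg n)) (S n)))). Qed.

Lemma inv_small eps : 0 < eps -> exists N, forall n, (N <= n)%nat -> / (INR n + 1) < eps.
Proof. intros He. destruct (archimed (/ eps)) as [H1 _].
 assert (0 < / eps) by (apply Rinv_0_lt_compat; auto).
 assert (0 <= IZR (up (/eps))) by lra. apply le_IZR in H0.
 exists (Z.to_nat (up (/ eps))). intros n Hn.
 assert (IZR (up (/eps)) <= INR n). { rewrite <- (Z2Nat.id (up (/eps))) by lia. rewrite <- INR_IZR_INZ. apply le_INR; auto. }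
 assert (/ eps < INR n + 1) by lra.
 apply Rinv_lt_contravar in H3. rewrite Rinv_inv in H3. auto. apply Rmult_lt_0_compat; lra. Qed.

Lemma BW1 (u : nat -> R) B : (forall n, Rabs (u n) <= B) -> exists sg L, sincr sg /\ Un_cv (fun n => u (sg n)) L.
Proof. intros Hb. destruct (Bolzano_Weierstrass u (fun c => -B <= c <= B) (compact_P3 (-B) B)) as [L HL].
 { intros n; specialize (Hb n); pose proof (Rle_abs (u n)); pose proof (Rle_abs (- u n)); rewrite Rabs_Ropp in *; lra. }
 destruct (extract_gen (fun k p => Rabs (u p - L) < / (INR k + 1))) as [sg [Hs Hp]].
 { intros N k. destruct (HL (fun y => Rabs (y - L) < / (INR k + 1)) N) as [p Hp]; eauto.
   assert (Hpos : 0 < / (INR k + 1)) by (apply Rinv_0_lt_compat; pose proof (pos_INR k); lra).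
   exists (mkposreal _ Hpos). intros y Hy. unfold disc in Hy. simpl in Hy. auto. }
 exists sg, L. split; auto. intros eps He. destruct (inv_small eps He) as [N HN]. exists N. intros n Hn.
 unfold R_dist. eapply Rlt_trans; [apply Hp| apply HN; auto]. Qed.

Lemma extract_multi (m : nat) (w : nat -> nat -> R) B : (forall j i, (i < m)%nat -> Rabs (w j i) <= B) ->
  exists rho L, sincr rho /\ forall i, (i < m)%nat -> Un_cv (fun j => w (rho j) i) (L i).
Proof. revert w. induction m; intros w Hb.
 - exists (fun n => n), (fun _ => 0). split. intros i j; auto. intros; lia.
 - destruct (IHm w) as [rho [L [Hr HL]]]. intros; apply Hb; lia.
   destruct (BW1 (fun j => w (rho j) m) B) as [sg [Lm [Hs HLm]]]. intros; apply Hb; lia.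
   exists (fun n => rho (sg n)), (fun i => if Nat.eqb i m then Lm else L i). split.
   apply sincr_comp; auto. intros i Hi. destruct (Nat.eqb_spec i m). subst; auto.
   apply (Un_cv_sub (fun j => w (rho j) i)); auto. apply HL; lia. Qed.

Lemma extract_multi_ev (m : nat) (w : nat -> nat -> R) B N0 : (forall j i, (N0 <= j)%nat -> (i < m)%nat -> Rabs (w j i) <= B) ->
  exists rho L, sincr rho /\ forall i, (i < m)%nat -> Un_cv (fun j => w (rho j) i) (L i).
Proof. intros Hb. destruct (extract_multi m (fun j i => w (j + N0)%nat i) B) as [rho [L [Hr HL]]].
 intros; apply Hb; lia. exists (fun j => (rho j + N0)%nat), L. split. intros i j Hij; specialize (Hr i j Hij); lia. auto. Qed.

Definition gc (G : Game) (k : nat) (f : nat -> R) : R :=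
  fsum (nS G) (fun s => if Nat.eqb (grp G s) k then f s * sprice G f s else 0).

Lemma costp_sum G p f : costp G p f = fsum (nS G) (fun s => f s * spricep G p f s).
Proof. unfold costp, spricep, loadp.
 rewrite (fsum_ext (nA G) _ (fun a => fsum (nS G) (fun s => r G a s * f s * p a (fsum (nS G) (fun s0 => r G a s0 * f s0))))).
 rewrite fsum_swap. apply fsum_ext. intros s Hs. rewrite <- fsum_scal_l. apply fsum_ext; intros; ring.
 intros a Ha. rewrite <- fsum_scal_r. auto. Qed.

Section Main.
Variable G : Game.
Variable l : nat -> R -> ER.
Variable lam : nat -> R.
Variable dd : nat -> nat -> R.
Variable gg : nat -> R.
Hypothesis Hval : valid_NCG G.
Hypothesis Hdd : forall j k, (k < K G)%nat -> 0 <= dd j k.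
Hypothesis Htt : cv_infty (fun j => T G (dd j)).
Hypothesis Hgg : forall j, 0 < gg j.
Hypothesis Hlam : forall k, (k < K G)%nat -> Un_cv (fun j => dd j k / T G (dd j)) (lam k).
Hypothesis HS1 : S1 G l.
Hypothesis HS2 : forall a x, (a < nA G)%nat -> inI G a x ->
         ER_lim (fun j => tau G a (T G (dd j) * x) / gg j) (l a x) /\ cont_at G l a x.
Definition Neg k := forall fj : nat -> nat -> R, (forall j, feasible G (dd j) (fj j)) ->
   Un_cv (fun j => / (T G (dd j) * gg j) * gc G k (fj j)) 0.
Hypothesis HS3 : forall k, (k < K G)%nat -> Neg k \/ (exists s, tight G l s /\ grp G s = k).
Hypothesis HS4 : forall h h', lim_NE G l lam h -> lim_SO G l lam h' -> costp G (lval l) h = costp G (lval l) h'.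
Hypothesis HS5 : forall h, lim_NE G l lam h -> 0 < costp G (lval l) h.

Let tt j := T G (dd j).

Lemma grpK s : (s < nS G)%nat -> (grp G s < K G)%nat.
Proof. destruct Hval as (_&H&_). auto. Qed.
Lemma grp_ex k : (k < K G)%nat -> exists s, (s < nS G)%nat /\ grp G s = k.
Proof. destruct Hval as (_&_&H&_). auto. Qed.
Lemma r_nn a s : (a < nA G)%nat -> (s < nS G)%nat -> 0 <= r G a s.
Proof. destruct Hval as (_&_&_&H&_). auto. Qed.
Lemma r_pos_a a : (a < nA G)%nat -> 0 < fsum (nS G) (fun s => r G a s).
Proof. destruct Hval as (_&_&_&_&_&H&_). auto. Qed.
Lemma tau_mono a x y : (a < nA G)%nat -> 0 <= x -> x <= y -> tau G a x <= tau G a y.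
Proof. destruct Hval as (_&_&_&_&_&_&H). intros; apply H; auto. Qed.
Lemma tau_nn a x : (a < nA G)%nat -> 0 <= x -> 0 <= tau G a x.
Proof. destruct Hval as (_&_&_&_&_&_&H). intros; apply H; auto. Qed.

Lemma tt_pos : exists N, forall j, (N <= j)%nat -> 0 < tt j.
Proof. apply cv_infty_ev_pos; auto. Qed.

Lemma fmax_ge_r a s : (s < nS G)%nat -> r G a s <= fmax (nS G) (fun s => r G a s).
Proof. intros; apply (fmax_ge _ (fun s => r G a s)); auto. Qed.

Lemma nonreal_inf a : (a < nA G)%nat -> ~ real_valued G l a ->
  forall x, inI G a x -> 0 < x -> l a x = PInf.
Proof. intros Ha Hn. destruct (HS1 a Ha) as [[H1 _]|H2]; auto.
 exfalso; apply Hn. intros x Hx. destruct (H1 x Hx) as [y [Hy _]]; eauto. Qed.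

Lemma inI_lim a (x : nat -> R) L : Un_cv x L -> (exists N, forall j, (N <= j)%nat -> inI G a (x j)) -> inI G a L.
Proof. intros H Hev. unfold inI in *. split.
 apply (Un_cv_ge_bound x); auto. destruct Hev as [N HN]; exists N; intros; apply HN; auto.
 apply (Un_cv_le_bound x); auto. destruct Hev as [N HN]; exists N; intros; apply HN; auto. Qed.

Lemma P_lemma a (x : nat -> R) L : (a < nA G)%nat -> real_valued G l a -> Un_cv x L ->
  (exists N, forall j, (N <= j)%nat -> inI G a (x j)) ->
  Un_cv (fun j => tau G a (tt j * x j) / gg j) (lval l a L).
Proof. intros Ha Hr Hx Hev. assert (HL : inI G a L) by (eapply inI_lim; eauto).
 destruct (Hr L HL) as [y Hy]. unfold lval; rewrite Hy.
 intros eps He. destruct (HS2 a L Ha HL) as [_ Hc]. destruct (Hc y Hy (eps/2) ltac:(lra)) as [del [Hd Hc2]].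
 set (M := fmax (nS G) (fun s => r G a s)).
 set (xm := Rmax 0 (L - del/2)). set (xp := Rmin M (L + del/2)).
 assert (HLb : 0 <= L <= M) by exact HL.
 assert (Hxm : inI G a xm). { unfold inI, xm; fold M. split. apply Rmax_l. apply Rmax_lub; lra. }
 assert (Hxp : inI G a xp). { unfold inI, xp; fold M. split. apply Rmin_glb; lra. apply Rmin_l. }
 assert (Hdm : Rabs (xm - L) < del).
 { unfold xm, Rmax. destruct (Rle_dec 0 (L - del/2)); apply Rabs_def1; lra. }
 assert (Hdp : Rabs (xp - L) < del).
 { unfold xp, Rmin. destruct (Rle_dec M (L + del/2)); apply Rabs_def1; lra. }
 destruct (Hc2 xm Hxm Hdm) as [ym [Hym Hym2]]. destruct (Hc2 xp Hxp Hdp) as [yp [Hyp Hyp2]].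
 destruct (HS2 a xm Ha Hxm) as [Hlm _]. rewrite Hym in Hlm. simpl in Hlm.
 destruct (HS2 a xp Ha Hxp) as [Hlp _]. rewrite Hyp in Hlp. simpl in Hlp.
 destruct (Hlm (eps/2) ltac:(lra)) as [N1 H1]. destruct (Hlp (eps/2) ltac:(lra)) as [N2 H2].
 destruct (Hx (del/2) ltac:(lra)) as [N3 H3]. destruct Hev as [N4 H4]. destruct tt_pos as [N5 H5].
 exists (max (max N1 N2) (max N3 (max N4 N5))). intros n Hn.
 specialize (H1 n ltac:(lia)). specialize (H2 n ltac:(lia)). specialize (H3 n ltac:(lia)).
 specialize (H4 n ltac:(lia)). specialize (H5 n ltac:(lia)). unfold R_dist in *.
 apply Rabs_def2 in H1. apply Rabs_def2 in H2. apply Rabs_def2 in H3. apply Rabs_def2 in Hym2. apply Rabs_def2 in Hyp2.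
 destruct H4 as [H4a H4b]. fold M in H4b.
 assert (xm <= x n) by (unfold xm; apply Rmax_lub; lra).
 assert (x n <= xp) by (unfold xp; apply Rmin_glb; lra).
 assert (0 <= xm) by (unfold xm; apply Rmax_l).
 assert (Tm : tau G a (tt n * xm) <= tau G a (tt n * x n)).
 { apply tau_mono; auto. apply Rmult_le_pos; lra. apply Rmult_le_compat_l; lra. }
 assert (Tp : tau G a (tt n * x n) <= tau G a (tt n * xp)).
 { apply tau_mono; auto. apply Rmult_le_pos; lra. apply Rmult_le_compat_l; lra. }
 pose proof (Hgg n). unfold tt in *.
 assert (tau G a (T G (dd n) * xm) / gg n <= tau G a (T G (dd n) * x n) / gg n)
   by (apply Rmult_le_compat_r; [left; apply Rinv_0_lt_compat; auto| auto]).
 assert (tau G a (T G (dd n) * x n) / gg n <= tau G a (T G (dd n) * xp) / gg n)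
   by (apply Rmult_le_compat_r; [left; apply Rinv_0_lt_compat; auto| auto]).
 apply Rabs_def1; lra. Qed.

Lemma sumF d f : feasible G d f -> fsum (nS G) f = T G d.
Proof. intros [_ Hf]. rewrite fsum_gvol by apply grpK. unfold T. apply fsum_ext; auto. Qed.

Lemma f_nn d f s : feasible G d f -> (s < nS G)%nat -> 0 <= f s.
Proof. intros [H _]; auto. Qed.

Lemma u_bounds d f s : feasible G d f -> 0 < T G d -> (s < nS G)%nat -> 0 <= f s / T G d <= 1.
Proof. intros Hf HT Hs. pose proof (sumF d f Hf). pose proof (f_nn d f s Hf Hs).
 assert (f s <= T G d). { rewrite <- H. apply fsum_ge_term; auto. intros; eapply f_nn; eauto. }
 split. apply Rmult_le_pos; auto. left; apply Rinv_0_lt_compat; auto.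
 apply (Rmult_le_reg_r (T G d)); auto. unfold Rdiv. rewrite Rmult_assoc, Rinv_l; lra. Qed.

Lemma load_scale f a c : c <> 0 -> loadp G f a = c * loadp G (fun s => f s / c) a.
Proof. intros Hc. unfold loadp. rewrite <- fsum_scal_l. apply fsum_ext. intros; field; auto. Qed.

Lemma load_inI d f a : feasible G d f -> 0 < T G d -> (a < nA G)%nat -> inI G a (loadp G (fun s => f s / T G d) a).
Proof. intros Hf HT Ha. unfold inI, loadp. split.
 apply fsum_nonneg. intros s Hs. apply Rmult_le_pos. apply r_nn; auto. apply u_bounds; auto.
 set (M := fmax (nS G) (fun s => r G a s)).
 apply Rle_trans with (fsum (nS G) (fun s => M * (f s / T G d))).
 apply fsum_le. intros s Hs. apply Rmult_le_compat_r. apply u_bounds; auto. apply fmax_ge_r; auto.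
 rewrite fsum_scal_l. unfold Rdiv. rewrite fsum_scal_r. rewrite (sumF d f Hf). rewrite Rinv_r by lra.
 lra. Qed.

Section Seq.
Variable F : nat -> nat -> R.
Hypothesis HF : forall j, feasible G (dd j) (F j).
Variable h : nat -> R.
Hypothesis Hu : forall s, (s < nS G)%nat -> Un_cv (fun j => F j s / tt j) (h s).

Lemma load_cv a : Un_cv (fun j => loadp G (fun s => F j s / tt j) a) (loadp G h a).
Proof. unfold loadp. apply (fsum_cv _ (fun j s => r G a s * (F j s / tt j))). intros s Hs.
 apply CV_mult. apply Un_cv_const. apply Hu; auto. Qed.

Lemma PA a : (a < nA G)%nat -> real_valued G l a ->
  Un_cv (fun j => tau G a (loadp G (F j) a) / gg j) (lval l a (loadp G h a)).
Proof. intros Ha Hr. eapply Un_cv_ev. apply (P_lemma a (fun j => loadp G (fun s => F j s / tt j) a)); auto.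
 apply load_cv. destruct tt_pos as [N HN]. exists N; intros; apply load_inI; auto. apply HN; auto.
 destruct tt_pos as [N HN]. exists N; intros j Hj. rewrite <- load_scale; auto. specialize (HN j Hj); lra. Qed.

Lemma A_lemma s : tight G l s ->
  Un_cv (fun j => sprice G (F j) s / gg j) (spricep G (lval l) h s).
Proof. intros [Hs Ht]. eapply Un_cv_ev.
 apply (fsum_cv _ (fun j a => r G a s * (tau G a (loadp G (F j) a) / gg j))).
 intros a Ha. destruct (r_nn a s Ha Hs) as [Hp|H0].
 - apply CV_mult. apply Un_cv_const. apply PA; auto.
 - rewrite <- H0. rewrite Rmult_0_l. eapply Un_cv_ev. apply (Un_cv_const 0). exists O; intros; ring.
 - exists O; intros j _. unfold sprice, spricep, Rdiv. rewrite <- fsum_scal_r. apply fsum_ext; intros; ring. Qed.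

Lemma h_bounds s : (s < nS G)%nat -> 0 <= h s <= 1.
Proof. intros Hs. destruct tt_pos as [N HN]. split.
 apply (Un_cv_ge_bound _ _ 0 (Hu s Hs)). exists N; intros; apply u_bounds; auto. apply HN; auto.
 apply (Un_cv_le_bound _ _ 1 (Hu s Hs)). exists N; intros; apply u_bounds; auto. apply HN; auto. Qed.

Lemma gvol_lim k : (k < K G)%nat -> gvol G h k = lam k.
Proof. intros Hk. apply (UL_sequence (fun j => dd j k / tt j)); auto.
 eapply Un_cv_ev. apply (fsum_cv _ (fun j s => if Nat.eqb (grp G s) k then F j s / tt j else 0)).
 intros s Hs. destruct (Nat.eqb (grp G s) k). apply Hu; auto. apply Un_cv_const.
 exists O. intros j _. destruct (HF j) as [_ Hg]. rewrite <- (Hg k Hk). unfold gvol, Rdiv. rewrite <- fsum_scal_r.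
 apply fsum_ext; intros. destruct (Nat.eqb (grp G i) k); ring. Qed.

End Seq.

Lemma nontight_res s : (s < nS G)%nat -> ~ tight G l s ->
  exists a, (a < nA G)%nat /\ 0 < r G a s /\ ~ real_valued G l a.
Proof. intros Hs Hn. apply NNPP; intro C. apply Hn. split; auto. intros a Ha Hr.
 apply NNPP; intro C2. apply C; eauto. Qed.

Lemma load_nn d f a : feasible G d f -> (a < nA G)%nat -> 0 <= loadp G f a.
Proof. intros Hf Ha. apply fsum_nonneg; intros. apply Rmult_le_pos. apply r_nn; auto. eapply f_nn; eauto. Qed.

Lemma sprice_nn d f s : feasible G d f -> (s < nS G)%nat -> 0 <= sprice G f s.
Proof. intros Hf Hs. apply fsum_nonneg; intros a Ha. apply Rmult_le_pos. apply r_nn; auto.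
 apply tau_nn; auto. eapply load_nn; eauto. Qed.

Definition term (F : nat -> nat -> R) j s := F j s * sprice G (F j) s / (tt j * gg j).

Lemma term_split F j s : term F j s = (F j s / tt j) * (sprice G (F j) s / gg j).
Proof. unfold term, Rdiv. rewrite Rinv_mult. ring. Qed.

Lemma term_nn F d j s : feasible G d (F j) -> 0 < tt j -> (s < nS G)%nat -> 0 <= term F j s.
Proof. intros Hf Ht Hs. unfold term. apply Rmult_le_pos. apply Rmult_le_pos. eapply f_nn; eauto. eapply sprice_nn; eauto.
 left; apply Rinv_0_lt_compat. apply Rmult_lt_0_compat; auto. Qed.

Lemma cost_terms F j : cost G (F j) / (tt j * gg j) = fsum (nS G) (term F j).
Proof. unfold cost. rewrite costp_sum. unfold Rdiv, term. rewrite <- fsum_scal_r. apply fsum_ext; intros. reflexivity. Qed.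

Lemma term_gc F k j s : (forall j, feasible G (dd j) (F j)) -> 0 < tt j -> (s < nS G)%nat -> grp G s = k ->
  term F j s <= / (tt j * gg j) * gc G k (F j).
Proof. intros HF Ht Hs Hk. unfold term, gc. rewrite (Rmult_comm (/ (tt j * gg j))). unfold Rdiv. apply Rmult_le_compat_r.
 left; apply Rinv_0_lt_compat. apply Rmult_lt_0_compat; auto.
 replace (F j s * sprice G (F j) s) with (if Nat.eqb (grp G s) k then F j s * sprice G (F j) s else 0)
   by (rewrite Hk, Nat.eqb_refl; auto).
 apply (fsum_ge_term _ (fun s => if Nat.eqb (grp G s) k then F j s * sprice G (F j) s else 0) s); auto.
 intros i Hi. destruct (Nat.eqb (grp G i) k). apply Rmult_le_pos. eapply f_nn; eauto. eapply sprice_nn; eauto. lra. Qed.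

Lemma E' F s c : (forall j, feasible G (dd j) (F j)) -> (s < nS G)%nat -> ~ tight G l s -> 0 < c ->
  (exists N, forall j, (N <= j)%nat -> c <= F j s / tt j) -> cv_infty (fun j => term F j s).
Proof. intros HF Hs Hn Hc Hev. destruct (nontight_res s Hs Hn) as [a [Ha [Hr Hnr]]].
 assert (Hc1 : c <= 1).
 { destruct Hev as [N1 H1]. destruct tt_pos as [N2 H2]. pose proof (H1 (max N1 N2) ltac:(lia)).
   pose proof (u_bounds _ _ s (HF (max N1 N2)) (H2 (max N1 N2) ltac:(lia)) Hs). unfold tt in *. lra. }
 set (x := r G a s * c).
 assert (Hx : inI G a x). { unfold inI, x. split. apply Rmult_le_pos; lra.
   pose proof (fmax_ge_r a s Hs). assert (r G a s * c <= r G a s * 1) by (apply Rmult_le_compat_l; lra). lra. }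
 assert (Hxp : 0 < x) by (unfold x; apply Rmult_lt_0_compat; auto).
 pose proof (nonreal_inf a Ha Hnr x Hx Hxp) as Hinf.
 destruct (HS2 a x Ha Hx) as [Hl _]. rewrite Hinf in Hl. simpl in Hl.
 apply (cv_infty_ge (fun j => c * (r G a s * (tau G a (T G (dd j) * x) / gg j)))).
 apply cv_infty_scal; auto. apply cv_infty_scal; auto.
 destruct Hev as [N1 H1]. destruct tt_pos as [N2 H2]. exists (max N1 N2). intros j Hj.
 specialize (H1 j ltac:(lia)). specialize (H2 j ltac:(lia)). rewrite term_split.
 assert (Hload : tt j * x <= loadp G (F j) a).
 { unfold loadp. apply Rle_trans with (r G a s * F j s).
   unfold x. assert (c * tt j <= F j s). { apply (Rmult_le_reg_r (/ tt j)). apply Rinv_0_lt_compat; auto.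
     rewrite Rmult_assoc, Rinv_r by lra. rewrite Rmult_1_r. auto. }
   assert (r G a s * (c * tt j) <= r G a s * F j s) by (apply Rmult_le_compat_l; lra). lra.
   apply (fsum_ge_term _ (fun s0 => r G a s0 * F j s0) s); auto. intros i Hi. apply Rmult_le_pos. apply r_nn; auto.
   eapply f_nn; eauto. }
 assert (Htau : tau G a (T G (dd j) * x) <= tau G a (loadp G (F j) a)).
 { unfold tt in H2, Hload. apply tau_mono; auto. apply Rmult_le_pos; lra. }
 assert (Hsp : r G a s * tau G a (loadp G (F j) a) <= sprice G (F j) s).
 { apply (fsum_ge_term _ (fun a0 => r G a0 s * tau G a0 (loadp G (F j) a0)) a); auto. intros i Hi. apply Rmult_le_pos.
   apply r_nn; auto. apply tau_nn; auto. eapply load_nn; eauto. }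
 pose proof (Hgg j). assert (0 <= tau G a (T G (dd j) * x)) by (unfold tt in H2; apply tau_nn; auto; apply Rmult_le_pos; lra).
 assert (r G a s * (tau G a (T G (dd j) * x) / gg j) <= sprice G (F j) s / gg j).
 { unfold Rdiv. rewrite <- Rmult_assoc. apply Rmult_le_compat_r. left; apply Rinv_0_lt_compat; auto.
   assert (r G a s * tau G a (T G (dd j) * x) <= r G a s * tau G a (loadp G (F j) a)) by (apply Rmult_le_compat_l; lra). lra. }
 apply Rmult_le_compat; auto. lra. apply Rmult_le_pos. lra. apply Rmult_le_pos; auto. left; apply Rinv_0_lt_compat; auto. Qed.

Lemma E_lemma F h s : (forall j, feasible G (dd j) (F j)) -> (s < nS G)%nat -> ~ tight G l s ->
  Un_cv (fun j => F j s / tt j) (h s) -> 0 < h s -> cv_infty (fun j => term F j s).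
Proof. intros HF Hs Hn Hu Hh. apply (E' F s (h s / 2)); auto. lra.
 destruct (Hu (h s / 2)) as [N HN]. lra. exists N. intros j Hj. specialize (HN j Hj). unfold R_dist in HN.
 apply Rabs_def2 in HN. lra. Qed.

Lemma term_tight F h s : (forall j, feasible G (dd j) (F j)) -> (forall s, (s < nS G)%nat -> Un_cv (fun j => F j s / tt j) (h s)) ->
  tight G l s -> Un_cv (fun j => term F j s) (h s * spricep G (lval l) h s).
Proof. intros HF Hu Ht. eapply Un_cv_ev. apply CV_mult. apply Hu. apply Ht. apply (A_lemma F HF h Hu s Ht).
 exists O. intros; rewrite term_split; auto. Qed.

Definition tsel s x := if excluded_middle_informative (tight G l s) then x else 0.

Lemma K_lemma F h : (forall j, feasible G (dd j) (F j)) -> (forall s, (s < nS G)%nat -> Un_cv (fun j => F j s / tt j) (h s)) ->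
  (forall s, (s < nS G)%nat -> ~ tight G l s -> h s = 0) ->
  Un_cv (fun j => fsum (nS G) (fun s => tsel s (term F j s))) (costp G (lval l) h).
Proof. intros HF Hu Hh. rewrite costp_sum. apply (fsum_cv _ (fun j s => tsel s (term F j s))). intros s Hs.
 unfold tsel. destruct (excluded_middle_informative (tight G l s)). apply term_tight; auto.
 rewrite Hh by auto. rewrite Rmult_0_l. apply Un_cv_const. Qed.

Lemma K_full F h : (forall j, feasible G (dd j) (F j)) -> (forall s, (s < nS G)%nat -> Un_cv (fun j => F j s / tt j) (h s)) ->
  (forall s, (s < nS G)%nat -> ~ tight G l s -> h s = 0) ->
  (forall s, (s < nS G)%nat -> ~ tight G l s -> Un_cv (fun j => term F j s) 0) ->
  Un_cv (fun j => cost G (F j) / (tt j * gg j)) (costp G (lval l) h).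
Proof. intros HF Hu Hh Ht. eapply Un_cv_ev. rewrite costp_sum. apply (fsum_cv _ (fun j s => term F j s)). intros s Hs.
 destruct (classic (tight G l s)). apply term_tight; auto. rewrite Hh by auto. rewrite Rmult_0_l. auto.
 exists O; intros. symmetry; apply cost_terms. Qed.

Lemma tsel_le F j : (forall j, feasible G (dd j) (F j)) -> 0 < tt j ->
  fsum (nS G) (fun s => tsel s (term F j s)) <= cost G (F j) / (tt j * gg j).
Proof. intros HF Ht. rewrite cost_terms. apply fsum_le. intros s Hs. unfold tsel.
 destruct (excluded_middle_informative (tight G l s)). lra. eapply term_nn; eauto. Qed.

Lemma lam_nn k : (k < K G)%nat -> 0 <= lam k.
Proof. intros Hk. apply (Un_cv_ge_bound _ _ 0 (Hlam k Hk)). destruct tt_pos as [N HN]. exists N. intros j Hj.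
 apply Rmult_le_pos. apply Hdd; auto. left; apply Rinv_0_lt_compat; apply HN; auto. Qed.

Lemma neg_term F k s : (forall j, feasible G (dd j) (F j)) -> Neg k -> (s < nS G)%nat -> grp G s = k ->
  Un_cv (fun j => term F j s) 0.
Proof. intros HF Hn Hs Hk. apply (Un_cv_squeeze (fun _ => 0) (fun j => / (tt j * gg j) * gc G k (F j))).
 apply Un_cv_const. apply Hn; auto. destruct tt_pos as [N HN]. exists N. intros j Hj. split.
 eapply term_nn; eauto. apply term_gc; auto. Qed.

Lemma h_zero_bounded F h s : (forall j, feasible G (dd j) (F j)) -> (s < nS G)%nat -> ~ tight G l s ->
  Un_cv (fun j => F j s / tt j) (h s) -> (exists B N, forall j, (N <= j)%nat -> term F j s <= B) -> h s = 0.
Proof. intros HF Hs Hn Hu [B HB]. destruct tt_pos as [N HN].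
 assert (0 <= h s). { apply (Un_cv_ge_bound _ _ 0 Hu). exists N; intros; apply u_bounds; auto. apply HN; auto. }
 destruct H as [H|H]; auto. exfalso. eapply cv_infty_bounded_false. eapply E_lemma; eauto. eauto. Qed.

Definition Tk k := exists s, tight G l s /\ grp G s = k.
Definition rep k : nat :=
  match excluded_middle_informative (Tk k) with
  | left H => proj1_sig (constructive_indefinite_description _ H)
  | right _ => match excluded_middle_informative (exists s, (s < nS G)%nat /\ grp G s = k) with
               | left H => proj1_sig (constructive_indefinite_description _ H)
               | right _ => O end end.

Lemma rep_spec k : (k < K G)%nat -> (rep k < nS G)%nat /\ grp G (rep k) = k /\ (Tk k -> tight G l (rep k)).
Proof. intros Hk. unfold rep. destruct (excluded_middle_informative (Tk k)) as [H|H].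
 - destruct (constructive_indefinite_description _ H) as [s [Hs1 Hs2]]. simpl. split; [apply Hs1|auto].
 - destruct (excluded_middle_informative _) as [H2|H2].
   + destruct (constructive_indefinite_description _ H2) as [s [Hs1 Hs2]]. simpl. split; auto. split; auto. intro; contradiction.
   + exfalso; apply H2; apply grp_ex; auto. Qed.

Lemma gvol_rep d k : (k < K G)%nat ->
  fsum (nS G) (fun s => if Nat.eqb (grp G s) k then (if Nat.eqb s (rep k) then d else 0) else 0) = d.
Proof. intros Hk. destruct (rep_spec k Hk) as [H1 [H2 _]].
 rewrite (fsum_ext _ _ (fun s => if Nat.eqb (rep k) s then d else 0)). apply fsum_ind; auto.
 intros s Hs. destruct (Nat.eqb_spec s (rep k)); destruct (Nat.eqb_spec (rep k) s); try lia.
 subst; rewrite H2, Nat.eqb_refl; auto. destruct (Nat.eqb (grp G s) k); auto. Qed.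

Definition prof0 (d : nat -> R) s := if Nat.eqb s (rep (grp G s)) then d (grp G s) else 0.

Lemma prof0_feas d : (forall k, (k < K G)%nat -> 0 <= d k) -> feasible G d (prof0 d).
Proof. intros Hd. split. intros s Hs. unfold prof0. destruct (Nat.eqb s _). apply Hd, grpK; auto. lra.
 intros k Hk. unfold gvol. rewrite <- (gvol_rep (d k) k Hk). apply fsum_ext. intros s Hs. unfold prof0.
 destruct (Nat.eqb_spec (grp G s) k); auto. subst. auto. Qed.

Lemma lam_notight k : (k < K G)%nat -> ~ Tk k -> lam k = 0.
Proof. intros Hk HT. pose proof (lam_nn k Hk). destruct H as [H|H]; auto. exfalso.
 destruct (HS3 k Hk) as [Hn|Ht]; [|contradiction].
 destruct (rep_spec k Hk) as [H1 [H2 _]].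
 set (F := fun j => prof0 (dd j)). assert (HF : forall j, feasible G (dd j) (F j)) by (intros; apply prof0_feas; auto).
 assert (Hnt : ~ tight G l (rep k)) by (intro C; apply HT; exists (rep k); auto).
 assert (Hinf : cv_infty (fun j => term F j (rep k))).
 { apply (E' F (rep k) (lam k / 2)); auto. lra. destruct (Hlam k Hk (lam k / 2)) as [N HN]. lra.
   exists N. intros j Hj. specialize (HN j Hj). unfold R_dist in HN. apply Rabs_def2 in HN.
   unfold F, prof0. rewrite H2, Nat.eqb_refl. unfold tt. lra. }
 pose proof (neg_term F k (rep k) HF Hn H1 H2) as Hz.
 apply (cv_infty_bounded_false _ 1 Hinf). destruct (Hz 1 ltac:(lra)) as [N HN]. exists N. intros j Hj.
 specialize (HN j Hj). unfold R_dist in HN. apply Rabs_def2 in HN. lra. Qed.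

Definition profh (h' : nat -> R) (d : nat -> R) s :=
  let k := grp G s in
  if excluded_middle_informative (Tk k) then
    (if Rlt_dec 0 (lam k) then h' s * d k / lam k else prof0 d s)
  else prof0 d s.

Lemma hprime_group_zero h' k s : lim_feasible G l lam h' -> (k < K G)%nat -> Tk k -> lam k = 0 ->
  (s < nS G)%nat -> grp G s = k -> h' s = 0.
Proof. intros [Hnn [_ Hg]] Hk HT Hl Hs Hgs. pose proof (Hg k Hk HT) as Hv. rewrite Hl in Hv.
 apply Rle_antisym; [|apply Hnn; auto]. rewrite <- Hv. unfold gvol.
 replace (h' s) with (if Nat.eqb (grp G s) k then h' s else 0) by (rewrite Hgs, Nat.eqb_refl; auto).
 apply (fsum_ge_term _ (fun s => if Nat.eqb (grp G s) k then h' s else 0)); auto.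
 intros i Hi. destruct (Nat.eqb (grp G i) k); [apply Hnn; auto| lra]. Qed.

Lemma profh_feas h' d : lim_feasible G l lam h' -> (forall k, (k < K G)%nat -> 0 <= d k) -> feasible G d (profh h' d).
Proof. intros Hh Hd. pose proof (prof0_feas d Hd) as [P1 P2]. destruct Hh as [Hnn [Hnt Hg]]. split.
 - intros s Hs. unfold profh. destruct (excluded_middle_informative _); auto. destruct (Rlt_dec _ _); auto.
   unfold Rdiv. apply Rmult_le_pos. apply Rmult_le_pos; auto. apply Hd, grpK; auto. left; apply Rinv_0_lt_compat; auto.
 - intros k Hk. unfold gvol. destruct (excluded_middle_informative (Tk k)) as [HT|HT].
   + destruct (Rlt_dec 0 (lam k)) as [Hl|Hl].
     * rewrite (fsum_ext _ _ (fun s => (if Nat.eqb (grp G s) k then h' s else 0) * (d k / lam k))).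
       rewrite fsum_scal_r. fold (gvol G h' k). rewrite Hg; auto. field; lra.
       intros s Hs. unfold profh. destruct (Nat.eqb_spec (grp G s) k). subst.
       destruct (excluded_middle_informative _); [|contradiction]. destruct (Rlt_dec _ _); [|contradiction]. field; lra. ring.
     * rewrite <- (P2 k Hk). unfold gvol. apply fsum_ext. intros s Hs. destruct (Nat.eqb_spec (grp G s) k); auto. subst.
       unfold profh. destruct (excluded_middle_informative _); auto. destruct (Rlt_dec _ _); auto. contradiction.
   + rewrite <- (P2 k Hk). unfold gvol. apply fsum_ext. intros s Hs. destruct (Nat.eqb_spec (grp G s) k); auto. subst.
     unfold profh. destruct (excluded_middle_informative _); auto. contradiction. Qed.

Lemma profh_cv h' s : lim_feasible G l lam h' -> (s < nS G)%nat ->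
  Un_cv (fun j => profh h' (dd j) s / tt j) (h' s).
Proof. intros Hh Hs. pose proof (grpK s Hs) as Hk. set (k := grp G s) in *.
 destruct (rep_spec k Hk) as [R1 [R2 R3]].
 assert (Hp0 : Un_cv (fun j => prof0 (dd j) s / tt j) (if Nat.eqb s (rep k) then lam k else 0)).
 { unfold prof0. fold k. destruct (Nat.eqb s (rep k)). apply Hlam; auto.
   eapply Un_cv_ev. apply Un_cv_const. exists O; intros; unfold Rdiv; ring. }
 unfold profh. fold k. destruct (excluded_middle_informative (Tk k)) as [HT|HT].
 - destruct (Rlt_dec 0 (lam k)) as [Hl|Hl].
   + assert (HC := CV_mult (fun _ => h' s / lam k) (fun j => dd j k / tt j) _ _ (Un_cv_const _) (Hlam k Hk)).
     replace (h' s / lam k * lam k) with (h' s) in HC by (field; lra).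
     eapply Un_cv_ev. exact HC. exists O; intros; unfold Rdiv; ring.
   + assert (Hl0 : lam k = 0) by (pose proof (lam_nn k Hk); lra).
     rewrite (hprime_group_zero h' k s Hh Hk HT Hl0 Hs eq_refl). rewrite Hl0 in Hp0.
     destruct (Nat.eqb s (rep k)); auto.
 - assert (h' s = 0). { destruct Hh as [_ [Hnt _]]. apply Hnt; auto. intro C; apply HT; exists s; auto. }
   rewrite H. rewrite (lam_notight k Hk HT) in Hp0. destruct (Nat.eqb s (rep k)); auto. Qed.

Lemma profh_cost h' : lim_feasible G l lam h' ->
  Un_cv (fun j => cost G (profh h' (dd j)) / (tt j * gg j)) (costp G (lval l) h').
Proof. intros Hh. set (F := fun j => profh h' (dd j)).
 assert (HF : forall j, feasible G (dd j) (F j)) by (intros; apply profh_feas; auto).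
 apply (K_full F h' HF). intros; apply profh_cv; auto.
 intros s Hs Hn. destruct Hh as [_ [Hnt _]]. auto.
 intros s Hs Hn. pose proof (grpK s Hs) as Hk. set (k := grp G s) in *. destruct (rep_spec k Hk) as [R1 [R2 R3]].
 destruct (excluded_middle_informative (Tk k)) as [HT|HT].
 - eapply Un_cv_ev. apply (Un_cv_const 0). exists O. intros j _.
   assert (F j s = 0).
   { unfold F, profh. fold k. destruct (excluded_middle_informative _); [|contradiction].
     destruct (Rlt_dec _ _). destruct Hh as [_ [Hnt _]]. rewrite Hnt; auto. unfold Rdiv; ring.
     unfold prof0. fold k. destruct (Nat.eqb_spec s (rep k)) as [E|E]; auto. exfalso; apply Hn; rewrite E; auto. }
   unfold term. rewrite H. unfold Rdiv; ring.
 - destruct (HS3 k Hk) as [Hn2|Ht]; [|contradiction]. apply (neg_term F k s HF Hn2 Hs eq_refl). Qed.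

Lemma ratio_eq a b X : X <> 0 -> (a / X) / (b / X) = a / b.
Proof. intros HX. unfold Rdiv. rewrite Rinv_mult, Rinv_inv.
 replace (a * / X * (/ b * X)) with (a * / b * (X * / X)) by ring. rewrite Rinv_r by auto. ring. Qed.

Lemma main_seq F S h1 h2 : (forall j, is_NE G (dd j) (F j)) -> (forall j, is_SO G (dd j) (S j)) ->
  (forall s, (s < nS G)%nat -> Un_cv (fun j => F j s / tt j) (h1 s)) ->
  (forall s, (s < nS G)%nat -> Un_cv (fun j => S j s / tt j) (h2 s)) ->
  Un_cv (fun j => cost G (F j) / cost G (S j)) 1.
Proof. intros HNE HSO Hu1 Hu2.
 assert (HF : forall j, feasible G (dd j) (F j)) by (intros; apply HNE).
 assert (HS : forall j, feasible G (dd j) (S j)) by (intros; apply HSO).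
 destruct tt_pos as [N0 HN0].
 assert (NE1 : forall s, (s < nS G)%nat -> ~ tight G l s -> h1 s = 0 /\ Un_cv (fun j => term F j s) 0).
 { intros s Hs Hn. pose proof (grpK s Hs) as Hk. destruct (HS3 _ Hk) as [Hneg|[s0 [Ht0 Hg0]]].
   - pose proof (neg_term F _ s HF Hneg Hs eq_refl) as Hz. split; auto.
     apply (h_zero_bounded F h1 s HF Hs Hn (Hu1 s Hs)). exists 1. destruct (Hz 1 ltac:(lra)) as [N HN]. exists N.
     intros j Hj; specialize (HN j Hj); unfold R_dist in HN; apply Rabs_def2 in HN; lra.
   - pose proof (A_lemma F HF h1 Hu1 s0 Ht0) as HP. destruct Ht0 as [Hs0 _].
     assert (Hineq : forall j, 0 < tt j -> 0 <= term F j s <= (F j s / tt j) * (sprice G (F j) s0 / gg j)).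
     { intros j Htj. split. eapply term_nn; eauto. rewrite term_split.
       pose proof (u_bounds _ _ s (HF j) Htj Hs). destruct (f_nn _ _ s (HF j) Hs) as [Hp|Hz].
       - apply Rmult_le_compat_l. unfold tt; lra. unfold Rdiv. apply Rmult_le_compat_r. left; apply Rinv_0_lt_compat; auto.
         destruct (HNE j) as [_ Hc]. apply Hc; auto.
       - rewrite <- Hz. unfold Rdiv. rewrite !Rmult_0_l. lra. }
     assert (h1 s = 0).
     { apply (h_zero_bounded F h1 s HF Hs Hn (Hu1 s Hs)). destruct (Un_cv_ev_bound _ _ HP) as [N HN].
       exists (spricep G (lval l) h1 s0 + 1), (max N N0). intros j Hj.
       specialize (HN j ltac:(lia)). specialize (HN0 j ltac:(lia)). destruct (Hineq j HN0) as [_ H2].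
       pose proof (u_bounds _ _ s (HF j) HN0 Hs).
       assert (0 <= sprice G (F j) s0 / gg j). { unfold Rdiv; apply Rmult_le_pos. eapply sprice_nn; eauto.
         left; apply Rinv_0_lt_compat; auto. }
       assert (F j s / tt j * (sprice G (F j) s0 / gg j) <= 1 * (sprice G (F j) s0 / gg j))
         by (apply Rmult_le_compat_r; unfold tt; lra). lra. }
     split; auto. apply (Un_cv_squeeze (fun _ => 0) (fun j => (F j s / tt j) * (sprice G (F j) s0 / gg j))).
     apply Un_cv_const. replace 0 with (h1 s * spricep G (lval l) h1 s0) by (rewrite H; ring).
     apply CV_mult; auto. exists N0. intros j Hj. apply Hineq; auto. }
 assert (NE2 : Un_cv (fun j => cost G (F j) / (tt j * gg j)) (costp G (lval l) h1)).
 { apply K_full; auto. intros; apply NE1; auto. intros; apply NE1; auto. }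
 assert (Hlf1 : lim_feasible G l lam h1).
 { split; [|split]. intros s Hs; apply (h_bounds F HF h1 Hu1 s Hs). intros; apply NE1; auto.
   intros k Hk _. apply (gvol_lim F HF h1 Hu1 k Hk). }
 assert (NE3 : lim_NE G l lam h1).
 { split; auto. intros s s' Hts Hts' Hg Hp.
   apply (Un_cv_le_ev _ _ _ _ (A_lemma F HF h1 Hu1 s Hts) (A_lemma F HF h1 Hu1 s' Hts')).
   destruct (Hu1 s (proj1 Hts) (h1 s / 2)) as [N HN]. lra. exists (max N N0). intros j Hj.
   specialize (HN j ltac:(lia)). specialize (HN0 j ltac:(lia)). unfold R_dist in HN. apply Rabs_def2 in HN.
   assert (0 < F j s). { assert (0 < F j s / tt j) by lra. unfold Rdiv in H.
     apply Rmult_lt_reg_r with (/ tt j). apply Rinv_0_lt_compat; auto. lra. }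
   unfold Rdiv. apply Rmult_le_compat_r. left; apply Rinv_0_lt_compat; auto.
   destruct (HNE j) as [_ Hc]. apply Hc; auto. apply Hts. apply Hts'. }
 pose proof (HS5 h1 NE3) as Hc1.
 assert (Hbnd : exists N, forall j, (N <= j)%nat -> cost G (S j) / (tt j * gg j) <= cost G (F j) / (tt j * gg j)).
 { exists N0. intros j Hj. unfold Rdiv. apply Rmult_le_compat_r. left; apply Rinv_0_lt_compat.
   apply Rmult_lt_0_compat; auto. destruct (HSO j) as [_ Ho]. apply Ho; auto. }
 assert (SO1 : forall s, (s < nS G)%nat -> ~ tight G l s -> h2 s = 0).
 { intros s Hs Hn. apply (h_zero_bounded S h2 s HS Hs Hn (Hu2 s Hs)).
   destruct (Un_cv_ev_bound _ _ NE2) as [N HN]. destruct Hbnd as [N1 HN1].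
   exists (costp G (lval l) h1 + 1), (max N (max N0 N1)). intros j Hj.
   specialize (HN j ltac:(lia)). specialize (HN1 j ltac:(lia)). specialize (HN0 j ltac:(lia)).
   assert (term S j s <= cost G (S j) / (tt j * gg j)).
   { rewrite cost_terms. apply fsum_ge_term; auto. intros; eapply term_nn; eauto. }
   lra. }
 assert (Hlf2 : lim_feasible G l lam h2).
 { split; [|split]. intros s Hs; apply (h_bounds S HS h2 Hu2 s Hs). intros; apply SO1; auto.
   intros k Hk _. apply (gvol_lim S HS h2 Hu2 k Hk). }
 pose proof (K_lemma S h2 HS Hu2 SO1) as Hlow.
 assert (SO3 : lim_SO G l lam h2).
 { split; auto. intros h' Hh'. apply (Un_cv_le_ev _ _ _ _ Hlow (profh_cost h' Hh')).
   exists N0. intros j Hj. specialize (HN0 j Hj). eapply Rle_trans. apply tsel_le; auto.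
   unfold Rdiv. apply Rmult_le_compat_r. left; apply Rinv_0_lt_compat. apply Rmult_lt_0_compat; auto.
   destruct (HSO j) as [_ Ho]. apply Ho. apply profh_feas; auto. }
 pose proof (HS4 h1 h2 NE3 SO3) as Heq. rewrite <- Heq in Hlow.
 assert (Hb : Un_cv (fun j => cost G (S j) / (tt j * gg j)) (costp G (lval l) h1)).
 { apply (Un_cv_squeeze _ _ _ _ Hlow NE2). destruct Hbnd as [N1 HN1]. exists (max N0 N1). intros j Hj. split.
   apply tsel_le; auto. apply HN0; lia. apply HN1; lia. }
 eapply Un_cv_ev. apply (Un_cv_ratio _ _ _ NE2 Hb Hc1). exists N0. intros j Hj. apply ratio_eq.
 specialize (HN0 j Hj). pose proof (Hgg j). apply Rgt_not_eq. apply Rmult_lt_0_compat; auto. Qed.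
End Main.

Lemma sincr_inj rho : sincr rho -> forall i j, rho i = rho j -> i = j.
Proof. intros H i j E. destruct (Nat.lt_trichotomy i j) as [L|[L|L]]; auto.
 specialize (H i j L); lia. specialize (H j i L); lia. Qed.

Lemma sub_family (rho : nat -> nat) (P : nat -> (nat -> R) -> Prop) (fj f0 : nat -> nat -> R) :
  sincr rho -> (forall j, P (rho j) (fj j)) -> (forall i, P i (f0 i)) ->
  exists fi : nat -> nat -> R, (forall i, P i (fi i)) /\ (forall j, fi (rho j) = fj j).
Proof. intros Hr Hj H0.
 exists (fun i => match excluded_middle_informative (exists j, rho j = i) with
          | left H => fj (proj1_sig (constructive_indefinite_description _ H))
          | right _ => f0 i end). split.
 - intros i. destruct (excluded_middle_informative _) as [H|H]; auto.
   destruct (constructive_indefinite_description _ H) as [j0 E]. simpl. rewrite <- E. auto.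
 - intros j. destruct (excluded_middle_informative _) as [H|H].
   destruct (constructive_indefinite_description _ H) as [j0 E]. simpl. apply sincr_inj in E; auto. subst; auto.
   exfalso; apply H; eauto. Qed.

Lemma M_lemma G Adm : valid_NCG G -> (forall d, Adm d -> forall k, (k < K G)%nat -> 0 <= d k) ->
  scalable G Adm -> forall dn, (forall n, Adm (dn n)) -> cv_infty (fun n => T G (dn n)) ->
  forall fNE fSO : nat -> nat -> R, (forall n, is_NE G (dn n) (fNE n)) -> (forall n, is_SO G (dn n) (fSO n)) ->
  exists rho, sincr rho /\ Un_cv (fun j => cost G (fNE (rho j)) / cost G (fSO (rho j))) 1.
Proof. intros Hval Hnn Hsc dn Hadm Hcv fNE fSO HNE HSO.
 destruct (Hsc dn Hadm Hcv) as (phi & g & lam & l & Hphi & Hg & HS0 & HS1 & HS2 & HS3 & HS4 & HS5).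
 assert (Hphi' : sincr phi) by exact Hphi.
 set (tt0 := fun i => T G (dn (phi i))).
 assert (Htt0 : cv_infty tt0) by (apply (cv_infty_sub (fun n => T G (dn n))); auto).
 destruct (cv_infty_ev_pos _ Htt0) as [N0 HN0].
 set (w := fun i s => if Nat.ltb s (nS G) then fNE (phi i) s / tt0 i else fSO (phi i) (s - nS G)%nat / tt0 i).
 destruct (extract_multi_ev (nS G + nS G) w 1 N0) as [rho' [L [Hr' HL]]].
 { intros i s Hi Hs. unfold w. apply Rabs_le. destruct (Nat.ltb_spec s (nS G)).
   - assert (0 <= fNE (phi i) s / tt0 i <= 1) by (apply (u_bounds G Hval (dn (phi i))); [apply HNE| apply HN0; auto| auto]).
     lra.
   - assert (0 <= fSO (phi i) (s - nS G)%nat / tt0 i <= 1) by (apply (u_bounds G Hval (dn (phi i))); [apply HSO| apply HN0; auto| lia]).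
     lra. }
 exists (fun j => phi (rho' j)). split. apply sincr_comp; auto.
 apply (main_seq G l lam (fun j => dn (phi (rho' j))) (fun j => g (rho' j)) Hval) with (h1 := L) (h2 := fun s => L (s + nS G)%nat).
 - intros j k Hk. apply (Hnn _ (Hadm _)); auto.
 - apply (cv_infty_sub tt0); auto.
 - intros; apply Hg.
 - intros k Hk. apply (Un_cv_sub (fun i => dn (phi i) k / T G (dn (phi i)))); auto.
 - auto.
 - intros a x Ha Hx. destruct (HS2 a x Ha Hx) as [H1 H2]. split; auto.
   destruct (l a x); simpl in *. apply (Un_cv_sub (fun i => tau G a (T G (dn (phi i)) * x) / g i)); auto.
   apply (cv_infty_sub (fun i => tau G a (T G (dn (phi i)) * x) / g i)); auto.
 - intros k Hk. destruct (HS3 k Hk) as [Hn|Ht]; [left|right; auto].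
   intros fj Hfj.
   destruct (sub_family rho' (fun i f => feasible G (dn (phi i)) f) fj (fun i => fNE (phi i))) as [fi [Hfi Hfe]]; auto.
   intros; apply HNE.
   pose proof (Un_cv_sub _ _ rho' (Hn fi Hfi) Hr') as Hc. simpl in Hc.
   eapply Un_cv_ev. apply Hc. exists O. intros j _. rewrite Hfe. reflexivity.
 - auto.
 - auto.
 - intros; apply HNE.
 - intros; apply HSO.
 - intros s Hs. eapply Un_cv_ev. apply (HL s). lia. exists O. intros j _. unfold w.
   destruct (Nat.ltb_spec s (nS G)); [reflexivity|lia].
 - intros s Hs. eapply Un_cv_ev. apply (HL (s + nS G)%nat). lia. exists O. intros j _. unfold w.
   destruct (Nat.ltb_spec (s + nS G) (nS G)); [lia|]. replace (s + nS G - nS G)%nat with s by lia. reflexivity.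
Qed.

Theorem theorem2 (G : Game) (Adm : (nat -> R) -> Prop) :
  valid_NCG G ->
  (forall d, Adm d -> forall k, (k < K G)%nat -> 0 <= d k) ->
  scalable G Adm ->
  AWDG G Adm.
Proof. intros Hval Hnn Hsc dn Hadm Hcv fNE fSO HNE HSO.
 set (u := fun n => cost G (fNE n) / cost G (fSO n)).
 apply NNPP. intro Hnot.
 assert (Hex : exists eps, eps > 0 /\ forall N, exists n, (N <= n)%nat /\ ~ R_dist (u n) 1 < eps).
 { apply NNPP; intro C. apply Hnot. intros eps He. apply NNPP; intro C2. apply C. exists eps. split; auto.
   intros N. apply NNPP; intro C3. apply C2. exists N. intros n Hn. apply NNPP; intro C4. apply C3. exists n. split; auto. }
 destruct Hex as [eps [He Hn]].
 destruct (extract_gen (fun _ p => ~ R_dist (u p) 1 < eps)) as [psi [Hpsi Hp]].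
 { intros N _. destruct (Hn N) as [n [H1 H2]]. eauto. }
 destruct (M_lemma G Adm Hval Hnn Hsc (fun n => dn (psi n)) (fun n => Hadm (psi n))
            (cv_infty_sub (fun n => T G (dn n)) psi Hcv Hpsi) (fun n => fNE (psi n)) (fun n => fSO (psi n))
            (fun n => HNE (psi n)) (fun n => HSO (psi n))) as [rho [Hr Hc]].
 destruct (Hc eps He) as [N HN]. apply (Hp (rho N)). apply (HN N). lia. Qed.
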